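(* For every annotated CQ $(q,E)$ with $E=(E^+,E^-)$, the $\preceq^{\mathrm{cod}}$-generalizations for $(q,E)$ are precisely the $\preceq^{\mathrm{cod}}$-repairs for $(q,E')$, where $E'=(E^+\cup\{e_q\},E^-)$.
   Context: Data examples are pairs $(I,\mathbf a)$ with $I$ a finite instance and $\mathbf a$ a $k$-tuple of its values. A $k$-ary CQ is $q(x_1,\dots,x_k)\text{ :- }\alpha_1,\dots,\alpha_n$ (relational atoms, no constants, each answer variable in some atom). Its canonical example $e_q$ is $(I_q,(x_1,\dots,x_k))$ with $I_q$ the set of atoms of $q$ viewed as facts. $[\![q]\!]$ is the set of data examples $(I,\mathbf a)$ with $\mathbf a\in q(I)$; $\subseteq$ is query containment; $q$ fits $E$ iff $E^+\subseteq[\![q]\!]$ and $E^-\cap[\![q]\!]=\emptyset$. $q_1\preceq^{\mathrm{cod}}_q q_2$ iff $[\![q]\!]\oplus[\![q_1]\!]\subseteq[\![q]\!]\oplus[\![q_2]\!]$ ($\oplus$ symmetric difference), $\prec_q$ its strict part. A $\preceq^{\mathrm{cod}}$-repair for $(q,E)$ is a CQ $q'$ fitting $E$ such that no CQ $q''$ fitting $E$ has $q''\prec^{\mathrm{cod}}_q q'$. A $\preceq^{\mathrm{cod}}$-generalization for $(q,E)$ is a CQ $q'$ fitting $E$ with $q\subseteq q'$ such that no CQ $q''$ fitting $E$ with $q\subseteq q''$ has $q''\prec^{\mathrm{cod}}_q q'$. Candidate CQs use only relation symbols occurring in the input. *)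

(* Defs.v *)
From mathcomp Require Import all_boot.
From Stdlib Require Import List.
Set Implicit Arguments. Unset Strict Implicit. Unset Printing Implicit Defensive.

(* A schema: relation symbols [Rel] with arities [ar]. Values and variables are nat. *)

Definition atom {Rel : Type} (ar : Rel -> nat) (V : Type) : Type :=
  {r : Rel & (ar r).-tuple V}.

Definition atom_map {Rel : Type} {ar : Rel -> nat} {V W : Type} (h : V -> W)
  (f : atom ar V) : atom ar W :=
  existT _ (projT1 f) (map_tuple h (projT2 f)).

Definition in_atom {Rel : Type} {ar : Rel -> nat} {V : Type} (v : V) (f : atom ar V) : Prop :=
  List.In v (tval (projT2 f)).

Definition instance {Rel : Type} (ar : Rel -> nat) : Type := list (atom ar nat).

Definition example {Rel : Type} (ar : Rel -> nat) (k : nat) : Type :=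
  (instance ar * k.-tuple nat)%type.

Definition wf_example {Rel : Type} {ar : Rel -> nat} {k : nat} (e : example ar k) : Prop :=
  forall i : 'I_k, exists f, List.In f e.1 /\ in_atom (tnth e.2 i) f.

(* k-ary CQ: answer variables and body atoms (variables are nat, no constants). *)
Record cq {Rel : Type} (ar : Rel -> nat) (k : nat) : Type :=
  CQ { cq_ans : k.-tuple nat; cq_atoms : list (atom ar nat) }.

Definition wf_cq {Rel : Type} {ar : Rel -> nat} {k : nat} (q : cq ar k) : Prop :=
  forall i : 'I_k, exists f, List.In f (cq_atoms q) /\ in_atom (tnth (cq_ans q) i) f.

Definition canonical_example {Rel : Type} {ar : Rel -> nat} {k : nat} (q : cq ar k)
  : example ar k := (cq_atoms q, cq_ans q).

Definition sem {Rel : Type} {ar : Rel -> nat} {k : nat} (q : cq ar k) (e : example ar k) : Prop :=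
  exists h : nat -> nat,
    (forall f, List.In f (cq_atoms q) -> List.In (atom_map h f) e.1) /\
    map_tuple h (cq_ans q) = e.2.

Definition contained {Rel : Type} {ar : Rel -> nat} {k : nat} (q1 q2 : cq ar k) : Prop :=
  forall e, sem q1 e -> sem q2 e.

Definition symdiff {T : Type} (A B : T -> Prop) (x : T) : Prop :=
  (A x /\ ~ B x) \/ (B x /\ ~ A x).

Definition cod_le {Rel : Type} {ar : Rel -> nat} {k : nat} (q q1 q2 : cq ar k) : Prop :=
  forall e, symdiff (sem q) (sem q1) e -> symdiff (sem q) (sem q2) e.

Definition cod_lt {Rel : Type} {ar : Rel -> nat} {k : nat} (q q1 q2 : cq ar k) : Prop :=
  cod_le q q1 q2 /\ ~ cod_le q q2 q1.

Record labeled {Rel : Type} (ar : Rel -> nat) (k : nat) : Type :=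
  Labeled { pos : list (example ar k); neg : list (example ar k) }.

Definition wf_labeled {Rel : Type} {ar : Rel -> nat} {k : nat} (E : labeled ar k) : Prop :=
  (forall e, List.In e (pos E) -> wf_example e) /\ (forall e, List.In e (neg E) -> wf_example e).

Definition add_pos {Rel : Type} {ar : Rel -> nat} {k : nat} (E : labeled ar k) (e : example ar k)
  : labeled ar k := Labeled (e :: pos E) (neg E).

Definition fits {Rel : Type} {ar : Rel -> nat} {k : nat} (q : cq ar k) (E : labeled ar k) : Prop :=
  (forall e, List.In e (pos E) -> sem q e) /\ (forall e, List.In e (neg E) -> ~ sem q e).

Definition rel_in_input {Rel : Type} {ar : Rel -> nat} {k : nat} (q : cq ar k) (E : labeled ar k)
  (r : Rel) : Prop :=
  (exists f, List.In f (cq_atoms q) /\ projT1 f = r) \/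
  (exists e, (List.In e (pos E) \/ List.In e (neg E)) /\
             exists f, List.In f e.1 /\ projT1 f = r).

Definition candidate {Rel : Type} {ar : Rel -> nat} {k : nat} (q : cq ar k) (E : labeled ar k)
  (q' : cq ar k) : Prop :=
  wf_cq q' /\ forall f, List.In f (cq_atoms q') -> rel_in_input q E (projT1 f).

Definition cod_repair {Rel : Type} {ar : Rel -> nat} {k : nat} (q : cq ar k) (E : labeled ar k)
  (q' : cq ar k) : Prop :=
  candidate q E q' /\ fits q' E /\
  forall q'', candidate q E q'' -> fits q'' E -> ~ cod_lt q q'' q'.

Definition cod_generalization {Rel : Type} {ar : Rel -> nat} {k : nat} (q : cq ar k)
  (E : labeled ar k) (q' : cq ar k) : Prop :=
  candidate q E q' /\ fits q' E /\ contained q q' /\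
  forall q'', candidate q E q'' -> fits q'' E -> contained q q'' -> ~ cod_lt q q'' q'.

(* Main.v *)
Require Import Defs.
From mathcomp Require Import all_boot.

Lemma contained_sem (Rel : Type) (ar : Rel -> nat) (k : nat) (q q' : cq ar k) :
  contained q q' <-> sem q' (canonical_example q).
Proof.
split.
- move=> H; apply: H; exists id; split.
  + move=> f Hf /=. rewrite /atom_map. case: f Hf => r t Hf /=.
    have -> : map_tuple id t = t by apply: val_inj; rewrite /= map_id.
    exact Hf.
  + by apply: val_inj; rewrite /= map_id.
- move=> [h [Hh Ha]] e [g [Hg Hga]]; exists (fun x => g (h x)); split.
  + move=> f Hf. have := Hg _ (Hh _ Hf).
    suff -> : atom_map g (atom_map h f) = atom_map (fun x => g (h x)) f by [].
    rewrite /atom_map /=; congr existT; apply: val_inj; by rewrite /= -map_comp.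
  + rewrite -Hga; move: Ha; rewrite /canonical_example /= => <-; apply: val_inj; by rewrite /= -map_comp.
Qed.

Lemma fits_add (Rel : Type) (ar : Rel -> nat) (k : nat) (q' : cq ar k) E e :
  fits q' (add_pos E e) <-> sem q' e /\ fits q' E.
Proof.
rewrite /fits /add_pos /=; split.
- move=> [Hp Hn]; split; [apply: Hp; by left|split => //].
  move=> e' He'; apply: Hp; by right.
- move=> [Hs [Hp Hn]]; split => // e' [<-|He'] //; exact: Hp.
Qed.

Lemma cand_add (Rel : Type) (ar : Rel -> nat) (k : nat) (q q'' : cq ar k) E :
  candidate q (add_pos E (canonical_example q)) q'' <-> candidate q E q''.
Proof.
rewrite /candidate; split => -[W H]; split => // f Hf; have := H f Hf;
  rewrite /rel_in_input /=.
- move=> [A|[e [[[<-|P]|N] B]]]; [by left| |by right; exists e; auto|by right; exists e; auto].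
  by left.
- move=> [A|[e [[P|N] B]]]; [by left|by right; exists e; auto|by right; exists e; auto].
Qed.

Theorem proposition26 (Rel : Type) (ar : Rel -> nat) (k : nat)
  (q : cq ar k) (E : labeled ar k) :
  wf_cq q -> wf_labeled E ->
  forall q' : cq ar k,
    cod_generalization q E q' <-> cod_repair q (add_pos E (canonical_example q)) q'.
Proof.
move=> _ _ q'; rewrite /cod_generalization /cod_repair cand_add fits_add -contained_sem.
split.
- move=> [C [F [Ct M]]]; split => //; split => // q'' C'' F''.
  move/cand_add: C'' => C''; move/fits_add: F'' => [S F2].
  apply: M => //; exact/contained_sem.
- move=> [C [[Ct F] M]]; split => //; split => //; split => // q'' C'' F'' Ct''.
  apply: M; first exact/cand_add.
  apply/fits_add; split => //; exact/contained_sem.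
Qed.
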